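(* Let $w=(w_0,\dots,w_l)$ with $w_0$ a positive integer, $w_1,\dots,w_l$ nonnegative integers and $w_0\ge\cdots\ge w_l$. For a graph $G$ of order at least three, $\gamma_{(w_0,\dots,w_l)}(G)=2$ if and only if one of the following holds: (i) $w_2=0$, $\gamma(G)=1$, and either $w_0=2$ or $w_0=w_1=1$; (ii) $w_0=1$, $w_1=0$ and $\gamma(G)=2$; (iii) $w_0=1$, $w_1=1$ and $\gamma_t(G)=2$; (iv) $w_0=2$, $w_1=0$ and $\gamma_2(G)=2$; (v) $w_0=2$, $w_1=1$ and $\gamma_{\times 2}(G)=2$.
   Context: All graphs are finite and simple; $N(v)$ denotes the open neighbourhood and $N[v]=N(v)\cup\{v\}$. For a vector $w=(w_0,\dots,w_l)$ of nonnegative integers with $w_0\ge1$, a function $f:V(G)\to\{0,\dots,l\}$ is a $w$-dominating function if $\sum_{u\in N(v)}f(u)\ge w_i$ for every vertex $v$ with $f(v)=i$. The weight is $\omega(f)=\sum_v f(v)$, and $\gamma_w(G)$ is the minimum weight of a $w$-dominating function on $G$. $\gamma(G)$ is the domination number and $\gamma_t(G)$ the total domination number (minimum size of $S$ with every vertex having a neighbour in $S$). $\gamma_2(G)$ is the minimum size of $S\subseteq V(G)$ such that every vertex not in $S$ has at least two neighbours in $S$. $\gamma_{\times2}(G)$ (double domination number) is the minimum size of $S\subseteq V(G)$ such that $|N[v]\cap S|\ge 2$ for every $v\in V(G)$. *)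

(* Defs.v *)
From mathcomp Require Import all_boot.
Set Implicit Arguments. Unset Strict Implicit. Unset Printing Implicit Defensive.

Definition simple_graph (T : finType) (e : rel T) : Prop :=
  symmetric e /\ irreflexive e.

Definition is_min_value (X : Type) (P : X -> Prop) (weight : X -> nat) (k : nat) : Prop :=
  (exists x, P x /\ weight x = k) /\ (forall x, P x -> k <= weight x).

Definition nbsum (T : finType) (e : rel T) (f : T -> nat) (v : T) : nat :=
  \sum_(u | e v u) f u.

(* w is given as the sequence [w_0; ...; w_l] (so l = size w - 1).
   A w-dominating function f : V -> {0,...,l} with sum_{u in N(v)} f u >= w_{f v}. *)
Definition w_dominating (T : finType) (e : rel T) (w : seq nat)
  (f : {ffun T -> 'I_(size w)}) : Prop :=
  forall v : T, nth 0 w (f v) <= nbsum e (fun u => nat_of_ord (f u)) v.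

Definition fweight (T : finType) (n : nat) (f : {ffun T -> 'I_n}) : nat :=
  \sum_v nat_of_ord (f v).

Definition gamma_w_eq (T : finType) (e : rel T) (w : seq nat) (k : nat) : Prop :=
  is_min_value (w_dominating e (w := w)) (@fweight T (size w)) k.

Definition dominating (T : finType) (e : rel T) (S : {set T}) : Prop :=
  forall v, v \in S \/ exists2 u, u \in S & e v u.

Definition total_dominating (T : finType) (e : rel T) (S : {set T}) : Prop :=
  forall v, exists2 u, u \in S & e v u.

Definition two_dominating (T : finType) (e : rel T) (S : {set T}) : Prop :=
  forall v, v \notin S -> 2 <= #|[set u in S | e v u]|.

Definition double_dominating (T : finType) (e : rel T) (S : {set T}) : Prop :=
  forall v, 2 <= #|[set u in S | (u == v) || e v u]|.

Definition card_set (T : finType) (S : {set T}) : nat := #|S|.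

Definition gamma_eq (T : finType) (e : rel T) (k : nat) : Prop :=
  is_min_value (dominating e) (@card_set T) k.
Definition gamma_t_eq (T : finType) (e : rel T) (k : nat) : Prop :=
  is_min_value (total_dominating e) (@card_set T) k.
Definition gamma_2_eq (T : finType) (e : rel T) (k : nat) : Prop :=
  is_min_value (two_dominating e) (@card_set T) k.
Definition gamma_x2_eq (T : finType) (e : rel T) (k : nat) : Prop :=
  is_min_value (double_dominating e) (@card_set T) k.

(* "w_i = c", meaning the entry w_i exists (i <= l) and equals c. *)
Definition w_is (w : seq nat) (i c : nat) : Prop := i < size w /\ nth 0 w i = c.

(* Main.v *)
Require Import Defs.
From mathcomp Require Import all_boot.
From mathcomp Require Import zify.
Set Implicit Arguments. Unset Strict Implicit. Unset Printing Implicit Defensive.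

Lemma sum_supp1 (T : finType) (F : T -> nat) (P : pred T) x :
  (forall u, u != x -> F u = 0) -> \sum_(u | P u) F u = (if P x then F x else 0).
Proof.
move=> H; rewrite big_mkcond (bigD1 x) //= big1 ?addn0 // => u /H ->; by case: (P u).
Qed.

Lemma sum_supp2 (T : finType) (F : T -> nat) (P : pred T) x y : x != y ->
  (forall u, u != x -> u != y -> F u = 0) ->
  \sum_(u | P u) F u = (if P x then F x else 0) + (if P y then F y else 0).
Proof.
move=> xy H; rewrite big_mkcond (bigD1 x) //= (bigD1 y) 1?eq_sym //= big1 ?addn0 //.
move=> u /andP[ux uy]; rewrite H //; by case: (P u).
Qed.

Lemma sum_pos (T : finType) (F : T -> nat) (P : pred T) :
  0 < \sum_(u | P u) F u -> exists2 x, P x & 0 < F x.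
Proof.
move=> H; case: (pickP [pred x | P x && (0 < F x)]) => [x /andP[]|H0]; first by exists x.
move: H; rewrite big1 // => u Pu; move: (H0 u) => /=; rewrite Pu /=; by case: (F u).
Qed.

Lemma other2 (T : finType) (x y : T) : 2 < #|T| -> exists v, v != x /\ v != y.
Proof.
move=> T3; have := cardsC [set x; y]; have : #|[set x; y]| <= 2 by rewrite cards2; case: (x != y).
move=> H1 H2; have : 0 < #|~: [set x; y]| by lia.
case/card_gt0P => v; rewrite !inE negb_or => /andP[]; by exists v.
Qed.

Lemma mk_f (T : finType) n (g : T -> nat) : (forall u, g u < n) ->
  exists f : {ffun T -> 'I_n}, forall u, nat_of_ord (f u) = g u.
Proof. move=> H; exists [ffun u => Ordinal (H u)] => u; by rewrite ffunE. Qed.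

Definition Dom (T : finType) (e : rel T) := exists x : T, forall v, v != x -> e v x.

Lemma dom1 (T : finType) (e : rel T) z : dominating e [set z] -> forall v, v != z -> e v z.
Proof. move=> H v vz; case: (H v); first by rewrite inE (negbTE vz). by case=> u; rewrite inE => /eqP ->. Qed.

Lemma dom0 (T : finType) (e : rel T) (v : T) : ~ dominating e set0.
Proof. move=> H; case: (H v); first by rewrite inE. by case=> u; rewrite inE. Qed.

Lemma small_set (T : finType) (S : {set T}) : #|S| < 2 -> S = set0 \/ exists z, S = [set z].
Proof.
case E: #|S| => [|[|k]] // _; first by left; apply: cards0_eq.
by right; apply/cards1P; rewrite E.
Qed.

Lemma card_pair_le (T : finType) (P : pred T) x y :
  2 <= #|[set u in [set x; y] | P u]| -> P x && P y.
Proof.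
case Px: (P x); case Py: (P y) => //= H.
- have: #|[set u in [set x; y] | P u]| <= #|[set x]|.
    apply: subset_leq_card; apply/subsetP => u; rewrite !inE => /andP[/orP[]/eqP-> //]; by rewrite Py.
  rewrite cards1; lia.
- have: #|[set u in [set x; y] | P u]| <= #|[set y]|.
    apply: subset_leq_card; apply/subsetP => u; rewrite !inE => /andP[/orP[]/eqP-> //]; by rewrite Px.
  rewrite cards1; lia.
- have: #|[set u in [set x; y] | P u]| <= #|(set0 : {set T})|.
    apply: subset_leq_card; apply/subsetP => u; rewrite !inE => /andP[/orP[]/eqP->]; by rewrite ?Px ?Py.
  rewrite cards0; lia.
Qed.

Lemma card_pair_ge (T : finType) (P : pred T) x y : x != y -> P x -> P y ->
  2 <= #|[set u in [set x; y] | P u]|.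
Proof.
move=> xy Px Py; have -> : [set u in [set x; y] | P u] = [set x; y].
  apply/setP => u; rewrite !inE; case/boolP: (u == x) => [/eqP->|_] //=; by case/boolP: (u == y) => [/eqP->|].
by rewrite cards2 xy.
Qed.

Lemma card_filt_le (T : finType) (P : pred T) (S : {set T}) : #|[set u in S | P u]| <= #|S|.
Proof. apply: subset_leq_card; apply/subsetP => u; by rewrite inE => /andP[]. Qed.

Lemma g1_iff (T : finType) (e : rel T) : gamma_eq e 1 <-> Dom e.
Proof.
split.
- case=> [[S [HS /eqP/cards1P [z Sz]]] _]; subst S; exists z; exact: dom1.
- case=> x Dx; split.
  + exists [set x]; split; last by rewrite /card_set cards1.
    move=> v; case/boolP: (v == x) => [/eqP->|vx]; first by left; rewrite inE.
    by right; exists x; rewrite ?inE ?Dx.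
  + move=> S HS; rewrite /card_set lt0n; apply/negP => /eqP/cards0_eq S0; subst S.
    exact: (dom0 x HS).
Qed.

Lemma g2_iff (T : finType) (e : rel T) : gamma_eq e 2 <->
  ~ Dom e /\ exists x y, x != y /\ forall v, v != x -> v != y -> e v x || e v y.
Proof.
split.
- case=> [[S [HS /eqP/cards2P [x [y [xy Sxy]]]]] Hmin]; subst S; split.
  + case=> z Dz; have: 2 <= card_set [set z]; last by rewrite /card_set cards1.
    apply: Hmin => v; case/boolP: (v == z) => [/eqP->|vz]; first by left; rewrite inE.
    by right; exists z; rewrite ?inE ?Dz.
  + exists x, y; split => // v vx vy; case: (HS v); first by rewrite !inE (negbTE vx) (negbTE vy).
    case=> u; rewrite !inE => /orP[]/eqP-> ->; by rewrite ?orbT.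
- case=> nD [x [y [xy Hv]]]; split.
  + exists [set x; y]; split; last by rewrite /card_set cards2 xy.
    move=> v; case/boolP: ((v == x) || (v == y)) => [H|]; first by left; rewrite !inE.
    rewrite negb_or => /andP[vx vy]; move: (Hv v vx vy) => /orP[H|H]; right.
    * by exists x; rewrite ?inE ?eqxx.
    * by exists y; rewrite ?inE ?eqxx ?orbT.
  + move=> S HS; rewrite /card_set leqNgt; apply/negP => /small_set [S0|[z Sz]]; subst S.
    * exact: (dom0 x HS).
    * by apply: nD; exists z; apply: dom1.
Qed.

Lemma gt_iff (T : finType) (e : rel T) : simple_graph e -> (gamma_t_eq e 2 <->
  exists x y, x != y /\ e x y /\ forall v, v != x -> v != y -> e v x || e v y).
Proof.
move=> [esym eirr]; split.
- case=> [[S [HS /eqP/cards2P [x [y [xy Sxy]]]]] _]; subst S.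
  exists x, y; split => //; split.
  + case: (HS x) => u; rewrite !inE => /orP[]/eqP->; by rewrite ?eirr.
  + move=> v vx vy; case: (HS v) => u; rewrite !inE => /orP[]/eqP-> ->; by rewrite ?orbT.
- case=> x [y [xy [exy Hv]]]; split.
  + exists [set x; y]; split; last by rewrite /card_set cards2 xy.
    move=> v; case/boolP: (v == x) => [/eqP->|vx]; first by exists y; rewrite ?inE ?eqxx ?orbT.
    case/boolP: (v == y) => [/eqP->|vy]; first by exists x; rewrite ?inE ?eqxx // esym.
    move: (Hv v vx vy) => /orP[H|H].
    * by exists x; rewrite ?inE ?eqxx.
    * by exists y; rewrite ?inE ?eqxx ?orbT.
  + move=> S HS; rewrite /card_set leqNgt; apply/negP => /small_set [S0|[z Sz]]; subst S.
    * by case: (HS x) => u; rewrite inE.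
    * by case: (HS z) => u; rewrite inE => /eqP->; rewrite eirr.
Qed.

Lemma g2d_iff (T : finType) (e : rel T) : 2 < #|T| -> (gamma_2_eq e 2 <->
  exists x y, x != y /\ forall v, v != x -> v != y -> e v x && e v y).
Proof.
move=> T3; split.
- case=> [[S [HS /eqP/cards2P [x [y [xy Sxy]]]]] _]; subst S.
  exists x, y; split => // v vx vy; apply: (card_pair_le (P := e v)); apply: HS.
  by rewrite !inE (negbTE vx) (negbTE vy).
- case=> x [y [xy Hv]]; split.
  + exists [set x; y]; split; last by rewrite /card_set cards2 xy.
    move=> v; rewrite !inE negb_or => /andP[vx vy]; case/andP: (Hv v vx vy) => h1 h2.
    exact: card_pair_ge.
  + move=> S HS; rewrite /card_set leqNgt; apply/negP => S1.
    have: 0 < #|~: S| by have := cardsC S; lia.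
    case/card_gt0P => v; rewrite inE => /HS; have := card_filt_le (e v) S; lia.
Qed.

Lemma gx2_iff (T : finType) (e : rel T) : simple_graph e -> (gamma_x2_eq e 2 <->
  exists x y, x != y /\ e x y /\ forall v, v != x -> v != y -> e v x && e v y).
Proof.
move=> [esym eirr]; split.
- case=> [[S [HS /eqP/cards2P [x [y [xy Sxy]]]]] _]; subst S.
  exists x, y; split => //; split.
  + by case/andP: (card_pair_le (HS x)); rewrite eqxx eq_sym (negbTE xy).
  + move=> v vx vy; case/andP: (card_pair_le (HS v)); rewrite eq_sym (negbTE vx) eq_sym (negbTE vy) /= => -> ->.
    done.
- case=> x [y [xy [exy Hv]]]; split.
  + exists [set x; y]; split; last by rewrite /card_set cards2 xy.
    move=> v; apply: card_pair_ge => //.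
    * case/boolP: (v == x) => [/eqP->|vx]; first by rewrite eqxx.
      case/boolP: (v == y) => [/eqP->|vy]; first by rewrite esym exy orbT.
      by case/andP: (Hv v vx vy) => -> _; rewrite orbT.
    * case/boolP: (v == y) => [/eqP->|vy]; first by rewrite eqxx.
      case/boolP: (v == x) => [/eqP->|vx]; first by rewrite exy orbT.
      by case/andP: (Hv v vx vy) => _ ->; rewrite orbT.
  + move=> S HS; rewrite /card_set leqNgt; apply/negP => S1.
    have := HS x; have := card_filt_le (fun u => (u == x) || e x u) S; lia.
Qed.

Lemma gw_char (T : finType) (e : rel T) (w : seq nat) :
  0 < nth 0 w 0 -> simple_graph e -> 2 < #|T| ->
  (gamma_w_eq e w 2 <->
   ((2 < size w /\ nth 0 w 2 = 0 /\ nth 0 w 0 <= 2 /\ Dom e) \/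
    (1 < size w /\ exists x y, x != y /\ nth 0 w 1 <= e x y /\
        forall v, v != x -> v != y -> nth 0 w 0 <= e v x + e v y)) /\
   ~ (1 < size w /\ nth 0 w 1 = 0 /\ nth 0 w 0 = 1 /\ Dom e)).
Proof.
move=> w0 [esym eirr] T3; split.
- case=> [[f [fd fw]] fmin]; split.
  + move: fd fw; rewrite /w_dominating /fweight /nbsum => fd fw.
    have [x _ fx] : exists2 x, true & 0 < f x by apply: sum_pos; rewrite fw.
    have fxs := ltn_ord (f x).
    rewrite (bigD1 x) //= in fw.
    have [fx1|fx2] : nat_of_ord (f x) = 1 \/ nat_of_ord (f x) = 2 by lia.
    * have [y yx fy] : exists2 y, y != x & 0 < f y by apply: sum_pos; lia.
      rewrite (bigD1 y) //= in fw.
      have fy1 : nat_of_ord (f y) = 1 by lia.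
      have rest0 : forall u, u != x -> u != y -> nat_of_ord (f u) = 0.
        move=> u ux uy; move: fw; rewrite (bigD1 u) /=; last by rewrite ux uy.
        lia.
      have xy : x != y by rewrite eq_sym.
      right; split; first by lia.
      exists x, y; split => //; split.
      - move: (fd x); rewrite fx1 (sum_supp2 _ xy rest0) eirr fy1.
        by case: (e x y).
      - move=> v vx vy; move: (fd v); rewrite rest0 // (sum_supp2 _ xy rest0) fx1 fy1.
        by case: (e v x); case: (e v y).
    * have rest0 : forall u, u != x -> nat_of_ord (f u) = 0.
        move=> u ux; move: fw; rewrite (bigD1 u) /=; last by rewrite ux.
        lia.
      have Dx : forall v, v != x -> e v x.
        move=> v vx; move: (fd v); rewrite rest0 // (sum_supp1 _ rest0).
        case: (e v x) => //; lia.
      left; split; first by lia.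
      split; first by move: (fd x); rewrite fx2 (sum_supp1 _ rest0) eirr; lia.
      split; last by exists x.
      have [v [vx _]] := other2 x x T3.
      move: (fd v); rewrite rest0 // (sum_supp1 _ rest0) Dx // fx2 /=; lia.
  + case=> [s1 [n10 [n01 [x Dx]]]].
    have [f1 Hf1] : exists f : {ffun T -> 'I_(size w)}, forall u, nat_of_ord (f u) = (u == x).
      by apply: mk_f => u; case: (u == x); lia.
    have rest0 : forall u, u != x -> nat_of_ord (f1 u) = 0 by move=> u /negbTE ux; rewrite Hf1 ux.
    suff: 2 <= fweight f1 by rewrite /fweight (sum_supp1 _ rest0) Hf1 eqxx.
    apply: fmin => v; rewrite /nbsum (sum_supp1 _ rest0) Hf1 Hf1 eqxx.
    case/boolP: (v == x) => [/eqP->|vx] /=; first by rewrite n10.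
    by rewrite Dx // n01.
- case=> [AB nW1]; split.
  + case: AB => [[s2 [n20 [n02 [x Dx]]]] | [s1 [x [y [xy [n1 Hv]]]]]].
    * have [f Hf] : exists f : {ffun T -> 'I_(size w)}, forall u, nat_of_ord (f u) = (if u == x then 2 else 0).
        by apply: mk_f => u; case: (u == x); lia.
      have rest0 : forall u, u != x -> nat_of_ord (f u) = 0 by move=> u /negbTE ux; rewrite Hf ux.
      exists f; split; last by rewrite /fweight (sum_supp1 _ rest0) Hf eqxx.
      move=> v; rewrite /nbsum (sum_supp1 _ rest0) Hf Hf eqxx.
      case/boolP: (v == x) => [/eqP->|vx] /=; first by rewrite n20.
      by rewrite Dx.
    * have [f Hf] : exists f : {ffun T -> 'I_(size w)}, forall u, nat_of_ord (f u) = (if u == x then 1 else if u == y then 1 else 0).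
        by apply: mk_f => u; case: (u == x); case: (u == y); lia.
      have rest0 : forall u, u != x -> u != y -> nat_of_ord (f u) = 0.
        by move=> u /negbTE ux /negbTE uy; rewrite Hf ux uy.
      have fx : nat_of_ord (f x) = 1 by rewrite Hf eqxx.
      have fy : nat_of_ord (f y) = 1 by rewrite Hf eqxx eq_sym (negbTE xy).
      exists f; split; last by rewrite /fweight (sum_supp2 _ xy rest0) fx fy.
      move=> v; rewrite /nbsum (sum_supp2 _ xy rest0) fx fy.
      case/boolP: (v == x) => [/eqP->|vx] /=; first by rewrite fx eirr; move: n1; case: (e x y).
      case/boolP: (v == y) => [/eqP->|vy] /=; first by rewrite fy eirr esym; move: n1; case: (e x y).
      rewrite rest0 //; move: (Hv v vx vy); by case: (e v x); case: (e v y).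
  + move=> f fd; rewrite /fweight leqNgt; apply/negP => H.
    case: (pickP [pred x | 0 < f x]) => [x /= fx | f0].
    * rewrite (bigD1 x) //= in H.
      have fx1 : nat_of_ord (f x) = 1 by lia.
      have rest0 : forall u, u != x -> nat_of_ord (f u) = 0.
        move=> u ux; move: H; rewrite (bigD1 u) /=; last by rewrite ux.
        lia.
      have fxs := ltn_ord (f x).
      apply: nW1; split; first by lia.
      split; first by move: (fd x); rewrite fx1 /nbsum (sum_supp1 _ rest0) eirr; lia.
      have Dx : forall v, v != x -> e v x.
        move=> v vx; move: (fd v); rewrite rest0 // /nbsum (sum_supp1 _ rest0).
        case: (e v x) => //; lia.
      split; last by exists x.
      have [v [vx _]] := other2 x x T3.
      move: (fd v); rewrite rest0 // /nbsum (sum_supp1 _ rest0) Dx // fx1; lia.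
    * have : 0 < #|T| by lia.
      case/card_gt0P => v0 _.
      move: (fd v0); rewrite /nbsum big1; last by move=> u _; move: (f0 u) => /=; case: (nat_of_ord (f u)).
      have -> : nat_of_ord (f v0) = 0 by move: (f0 v0) => /=; case: (nat_of_ord (f v0)).
      lia.
Qed.


Lemma sorted01 (w : seq nat) : sorted geq w -> 1 < size w -> nth 0 w 1 <= nth 0 w 0.
Proof. by case: w => [|a [|b s]] //= /andP[]. Qed.
Lemma sorted12 (w : seq nat) : sorted geq w -> 2 < size w -> nth 0 w 2 <= nth 0 w 1.
Proof. by case: w => [|a [|b [|c s]]] //= /and3P[]. Qed.

Theorem theorem12 (w : seq nat) (T : finType) (e : rel T) :
  0 < size w ->
  0 < nth 0 w 0 ->
  sorted geq w ->
  simple_graph e ->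
  3 <= #|T| ->
  (gamma_w_eq e w 2 <->
     (w_is w 2 0 /\ gamma_eq e 1 /\ (w_is w 0 2 \/ (w_is w 0 1 /\ w_is w 1 1))) \/
         (w_is w 0 1 /\ w_is w 1 0 /\ gamma_eq e 2) \/
         (w_is w 0 1 /\ w_is w 1 1 /\ gamma_t_eq e 2) \/
         (w_is w 0 2 /\ w_is w 1 0 /\ gamma_2_eq e 2) \/
         (w_is w 0 2 /\ w_is w 1 1 /\ gamma_x2_eq e 2)).
Proof.
move=> s0 w0 ws sg T3.
have s01 := sorted01 ws; have s12 := sorted12 ws.
have [esym eirr] := sg.
rewrite (gw_char w0 sg T3) g1_iff g2_iff (gt_iff sg) (g2d_iff e T3) (gx2_iff sg) /w_is.
split.
- case=> [[[s2 [n20 [n02 D]]] | [s1 [x [y [xy [n1 Hv]]]]]] nW1].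
  + have := s01 (ltnW s2).
    have [n0e|n0e] : nth 0 w 0 = 1 \/ nth 0 w 0 = 2 by lia.
    * case: (leqP (nth 0 w 1) 0) => n1 n10.
      - by exfalso; apply: nW1; do 3!(split; first by lia).
      - by left; do 2!(split => //); right; lia.
    * by left; do 2!(split => //); left; lia.
  + have [v [vx vy]] := other2 x y T3.
    have := Hv v vx vy; have := s01 s1.
    have exy1 : e x y <= 1 by case: (e x y).
    have : e v x + e v y <= 2 by case: (e v x); case: (e v y).
    move=> ev n10 n0v.
    have [n0e|n0e] : nth 0 w 0 = 1 \/ nth 0 w 0 = 2 by lia.
    * have [n1e|n1e] : nth 0 w 1 = 0 \/ nth 0 w 1 = 1 by lia.
      - right; left; do 2!(split; first by lia); split.
          by move=> D; apply: nW1; do 3!(split; first by lia).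
        exists x, y; split => // u ux uy; have := Hv u ux uy; rewrite n0e.
        by case: (e u x); case: (e u y).
      - right; right; left; do 2!(split; first by lia).
        exists x, y; split => //; split; first by move: n1; rewrite n1e; case: (e x y).
        move=> u ux uy; have := Hv u ux uy; rewrite n0e.
        by case: (e u x); case: (e u y).
    * have [n1e|n1e] : nth 0 w 1 = 0 \/ nth 0 w 1 = 1 by lia.
      - right; right; right; left; do 2!(split; first by lia).
        exists x, y; split => // u ux uy; have := Hv u ux uy; rewrite n0e.
        by case: (e u x); case: (e u y).
      - right; right; right; right; do 2!(split; first by lia).
        exists x, y; split => //; split; first by move: n1; rewrite n1e; case: (e x y).
        move=> u ux uy; have := Hv u ux uy; rewrite n0e.
        by case: (e u x); case: (e u y).
- case=> [[[s2 n20] [D H]] | [[[_ n0e] [[s1 n1e] [nD [x [y [xy Hv]]]]]] | [[[_ n0e] [[s1 n1e] [x [y [xy [exy Hv]]]]]] | [[[_ n0e] [[s1 n1e] [x [y [xy Hv]]]]] | [[_ n0e] [[s1 n1e] [x [y [xy [exy Hv]]]]]]]]]].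
  + split.
      by left; split => //; split => //; split => //; case: H => [[_ ->]|[[_ ->]]].
    case=> _ [n10 [n01 _]]; case: H => [[_]|[_ [_]]]; lia.
  + split; last by case=> _ [_ [_ D]].
    right; split => //; exists x, y; split => //; rewrite n1e; split => // u ux uy.
    by have := Hv u ux uy; rewrite n0e; case: (e u x); case: (e u y).
  + split; last by case=> _ [n10 _]; lia.
    right; split => //; exists x, y; split => //; rewrite n1e exy; split => // u ux uy.
    by have := Hv u ux uy; rewrite n0e; case: (e u x); case: (e u y).
  + split; last by case=> _ [_ [n01 _]]; lia.
    right; split => //; exists x, y; split => //; rewrite n1e; split => // u ux uy.
    by have := Hv u ux uy; rewrite n0e; case: (e u x); case: (e u y).
  + split; last by case=> _ [_ [n01 _]]; lia.
    right; split => //; exists x, y; split => //; rewrite n1e exy; split => // u ux uy.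
    by have := Hv u ux uy; rewrite n0e; case: (e u x); case: (e u y).
Qed.
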